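(* Let $\mathbb{K}$ be a field, $A\in\mathbb{K}[x]^{m\times n}$, and $J=\{j_1<\dots<j_k\}\subseteq\{1,\dots,n\}$. Let $\phi_J:\{1,\dots,k\}\to\{1,\dots,n\}$ be given by $\phi_J(i)=j_i$, applied entrywise to tuples, and let $A_{*,J}$ be the submatrix of $A$ formed by the columns with indices in $J$. Then, viewing pivot supports as sets, $\rho(A)\cap J\subseteq\phi_J(\rho(A_{*,J}))$, and equality holds whenever $\rho(A)\subseteq J$.
   Context: For a row vector $p=[p_1,\dots,p_n]$, $\deg(p)=\max_j\deg(p_j)$; the pivot index of a nonzero $p$ is the largest $j$ with $\deg(p_j)=\deg(p)$, and $p_j$ is its pivot entry. A matrix $P\in\mathbb{K}[x]^{k\times n}$ is in Popov form if it has no zero row, the pivot indices of its rows are strictly increasing, its pivot entries are monic, and in each column containing a pivot entry all other entries have degree strictly less than that pivot entry. The Popov form of a matrix $M$ of rank $r$ is the unique matrix in $\mathbb{K}[x]^{r\times n}$ in Popov form whose rows generate the same $\mathbb{K}[x]$-module as the rows of $M$. The pivot support $\rho(M)$ of $M$ is the tuple of pivot indices of the rows of its Popov form (the empty tuple if $M$ has rank $0$). *)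

(* Defs.v *)
From HB Require Import structures.
From mathcomp Require Import all_boot all_order all_algebra.
From mathcomp Require Import fraction.
From Stdlib Require Import ClassicalEpsilon.
Set Implicit Arguments. Unset Strict Implicit. Unset Printing Implicit Defensive.
Import Order.TTheory GRing.Theory Num.Theory.
Local Open Scope ring_scope.

Section PopovDefs.
Variable K : fieldType.

(* Degrees are encoded through [size] (size p = deg p + 1, size 0 = 0,
   i.e. deg 0 = -oo), so comparisons of degrees are comparisons of sizes. *)

Definition rsize n (v : 'rV[{poly K}]_n) : nat := (\max_(j < n) size (v ord0 j))%N.

Definition is_pivot_index n (v : 'rV[{poly K}]_n) (j : 'I_n) : bool :=
  (size (v ord0 j) == rsize v) &&
  [forall j' : 'I_n, (j < j')%N ==> (size (v ord0 j') < rsize v)%N].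

Definition pivot_index n (v : 'rV[{poly K}]_n) : option 'I_n :=
  [pick j | is_pivot_index v j].

Definition popov k n (P : 'M[{poly K}]_(k, n)) : Prop :=
  exists pv : 'I_k -> 'I_n,
  [/\ forall i, row i P != 0,
      forall i, is_pivot_index (row i P) (pv i),
      forall i i' : 'I_k, (i < i')%N -> (pv i < pv i')%N,
      forall i, P i (pv i) \is monic
    & forall i i' : 'I_k, i' != i -> (size (P i' (pv i)) < size (P i (pv i)))%N].

Definition in_rowmod m n (M : 'M[{poly K}]_(m, n)) (v : 'rV[{poly K}]_n) : Prop :=
  exists c : 'rV[{poly K}]_m, v = c *m M.

Definition prank m n (M : 'M[{poly K}]_(m, n)) : nat :=
  \rank (map_mx (@tofrac _) M).

Definition popov_form_of m n (M : 'M[{poly K}]_(m, n)) r (P : 'M[{poly K}]_(r, n)) : Prop :=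
  [/\ r = prank M, popov P
    & forall v, in_rowmod M v <-> in_rowmod P v].

Definition pivots k n (P : 'M[{poly K}]_(k, n)) : seq 'I_n :=
  pmap (fun i => pivot_index (row i P)) (enum 'I_k).

(* pivot support rho(M): pivot indices of the rows of the Popov form of M
   (the Popov form exists and is unique; the fallback branch is never used) *)
Definition pivot_support m n (M : 'M[{poly K}]_(m, n)) : seq 'I_n :=
  match excluded_middle_informative
          (exists rP : {r : nat & 'M[{poly K}]_(r, n)},
              popov_form_of M (projT2 rP)) with
  | left H => pivots (projT2 (proj1_sig (constructive_indefinite_description _ H)))
  | right _ => [::]
  end.

(* phi_J : 'I_#|J| -> 'I_n, i |-> j_i, the i-th smallest element of J *)
Definition phiJ n (J : {set 'I_n}) (i : 'I_#|J|) : 'I_n := enum_val i.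

Definition colsJ m n (A : 'M[{poly K}]_(m, n)) (J : {set 'I_n}) : 'M[{poly K}]_(m, #|J|) :=
  colsub (@phiJ n J) A.

End PopovDefs.

(* Main.v *)
Require Import Defs.
From HB Require Import structures.
From mathcomp Require Import all_boot all_order all_algebra.
From mathcomp Require Import fraction generic_quotient zify.
From Stdlib Require Import ClassicalEpsilon Classical.
Set Implicit Arguments. Unset Strict Implicit. Unset Printing Implicit Defensive.
Import Order.TTheory GRing.Theory Num.Theory.
Local Open Scope ring_scope.
Local Open Scope quotient_scope.

Lemma lexn (a b x y n : nat) : (x < n)%N -> (y < n)%N -> (a * n + x <= b * n + y)%N ->
  (a < b)%N \/ (a = b /\ (x <= y)%N).
Proof.
move=> hx hy h; case: (ltngtP a b) => hab; [by left| |by right; split => //; lia].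
exfalso; nia.
Qed.

Lemma ex_min_prop (P : nat -> Prop) : (exists n, P n) -> exists n, P n /\ forall k, P k -> (n <= k)%N.
Proof.
move=> [n Hn]; apply: NNPP => H.
suff: forall k i, (i <= k)%N -> ~ P i by move/(_ n n (leqnn n)).
elim=> [|k IH] i Hi Pi.
  apply: H; exists i; split=> // k' _; move: Hi; rewrite leqn0 => /eqP ->; exact: leq0n.
case: (leqP i k) => h; first exact: IH h Pi.
apply: H; exists i; split=> // k' Pk'; rewrite leqNgt; apply/negP => lt.
apply: (IH k') => //; lia.
Qed.

Lemma frac_rep (R : idomainType) (x : {fraction R}) : exists a b : R, b != 0 /\ x * tofrac b = tofrac a.
Proof.
elim/quotW: x => r.
exists r.1, r.2; split; first exact: denom_ratioP.
have -> : tofrac r.2 = \pi_({fraction R}) (Ratio r.2 1).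
  by rewrite /tofrac; unlock.
have -> : tofrac r.1 = \pi_({fraction R}) (Ratio r.1 1).
  by rewrite /tofrac; unlock.
rewrite -[_ * _]/(FracField.mul _ _) -FracField.pi_mul.
apply/eqmodP; rewrite /= FracField.equivfE /FracField.mulf !numden_Ratio ?oner_neq0 ?mulf_neq0 ?denom_ratioP ?oner_neq0 //.
by rewrite !mulr1 mulrC.
Qed.

Lemma clear_den (R : idomainType) k (u : 'rV[{fraction R}]_k) :
  exists (d : R) (c : 'rV[R]_k), d != 0 /\ map_mx (@tofrac R) c = tofrac d *: u.
Proof.
pose ab (i : 'I_k) := epsilon (inhabits (0 : R, 1 : R))
   (fun ab => ab.2 != 0 /\ u ord0 i * tofrac ab.2 = tofrac ab.1).
have abP i : (ab i).2 != 0 /\ u ord0 i * tofrac (ab i).2 = tofrac (ab i).1.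
  rewrite /ab; apply: (epsilon_spec (inhabits (0 : R, 1 : R)) (fun ab => ab.2 != 0 /\ u ord0 i * tofrac ab.2 = tofrac ab.1)); have [a [b [h1 h2]]] := frac_rep (u ord0 i); by exists (a, b).
exists (\prod_i (ab i).2), (\row_i ((ab i).1 * \prod_(l | l != i) (ab l).2)).
split; first by apply/prodf_neq0 => i _; case: (abP i).
apply/rowP => i; rewrite !mxE [\prod_i0 _](bigD1 i) //= !tofracM.
case: (abP i) => _ <-.
by rewrite [RHS]mulrC mulrA.
Qed.

Lemma size_sub_lt (R : nzRingType) (a b : {poly R}) :
  size a = size b -> lead_coef a = lead_coef b -> (0 < size a)%N -> (size (a - b)%R < size a)%N.
Proof.
move=> hs hl hpos.
have hle : (size (a - b)%R <= size a)%N.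
  by apply: leq_trans (size_polyD _ _) _; rewrite size_polyN -hs maxnn.
rewrite ltn_neqAle hle andbT; apply/eqP => heq.
have : lead_coef (a - b) = 0.
  rewrite /lead_coef heq coefB.
  by move: hl; rewrite /lead_coef -hs => ->; rewrite subrr.
move/eqP; rewrite lead_coef_eq0 => /eqP h.
by move: heq; rewrite h size_poly0 => h0; move: hpos; rewrite -h0.
Qed.

Lemma enum_val_mono n (S : {set 'I_n}) (i i' : 'I_#|S|) : (i < i')%N -> (enum_val i < enum_val i')%N.
Proof.
move=> h.
have hs : sorted (fun x y : 'I_n => (x < y)%N) (enum S).
  rewrite /enum_mem -enumT; apply: sorted_filter; first by move=> ? ? ? /=; apply: ltn_trans.
  by have := iota_ltn_sorted 0 n; rewrite -val_enum_ord sorted_map.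
rewrite /enum_val.
have hi' : (i' < size (enum S))%N by rewrite -cardE.
have hi : (i < size (enum S))%N by rewrite -cardE.
rewrite (set_nth_default (enum_default i') _ hi).
apply: (sorted_ltn_nth (leT := fun x y : 'I_n => (x < y)%N)) => //.
by move=> ? ? ? /=; apply: ltn_trans.
Qed.
Section Basics.
Variable K : fieldType.
Local Notation poly := {poly K}.

Lemma size_le_rsize n (v : 'rV[poly]_n) j : (size (v ord0 j) <= rsize v)%N.
Proof. exact: (leq_bigmax (F := fun j => size (v ord0 j))). Qed.

Lemma rsize_le n (v : 'rV[poly]_n) N : (forall j, size (v ord0 j) <= N)%N -> (rsize v <= N)%N.
Proof. by move=> H; apply/bigmax_leqP => j _; exact: H. Qed.

Lemma pivot_intro n (v : 'rV[poly]_n) j d :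
  size (v ord0 j) = d -> (forall j', size (v ord0 j') <= d)%N ->
  (forall j' : 'I_n, (j < j')%N -> size (v ord0 j') < d)%N ->
  is_pivot_index v j /\ rsize v = d.
Proof.
move=> Hj Hle Hlt.
have Hr : rsize v = d.
  apply/eqP; rewrite eqn_leq; apply/andP; split; first exact: rsize_le.
  by move: (size_le_rsize v j); rewrite Hj.
split=> //; apply/andP; split; first by rewrite Hj Hr.
by apply/forallP => j'; apply/implyP => hj; rewrite Hr; exact: Hlt.
Qed.

Lemma pivotP n (v : 'rV[poly]_n) j : is_pivot_index v j ->
  size (v ord0 j) = rsize v /\ forall j' : 'I_n, (j < j')%N -> (size (v ord0 j') < rsize v)%N.
Proof. by case/andP => /eqP H /forallP H2; split => // j' hj; exact: (implyP (H2 j')). Qed.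

Lemma pivot_uniq n (v : 'rV[poly]_n) j1 j2 :
  is_pivot_index v j1 -> is_pivot_index v j2 -> j1 = j2.
Proof.
move=> /pivotP [h1 h1'] /pivotP [h2 h2'].
apply/val_inj; case: (ltngtP j1 j2) => // h.
- by have := h1' _ h; rewrite h2 ltnn.
- by have := h2' _ h; rewrite h1 ltnn.
Qed.

Lemma pivot_indexE n (v : 'rV[poly]_n) j : is_pivot_index v j -> pivot_index v = Some j.
Proof.
move=> Hj; rewrite /pivot_index; case: pickP => [j' Hj'|H].
  by rewrite (pivot_uniq Hj' Hj).
by rewrite H in Hj.
Qed.

Lemma rsize_eq0 n (v : 'rV[poly]_n) : (rsize v == 0%N) = (v == 0).
Proof.
apply/idP/idP.
- move=> /eqP H; apply/eqP/rowP => j; rewrite mxE; apply/eqP.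
  by rewrite -size_poly_eq0 -leqn0; move: (size_le_rsize v j); rewrite H.
- move=> /eqP ->; rewrite -leqn0; apply: rsize_le => j; by rewrite mxE size_poly0.
Qed.

Lemma pivot_exists n (v : 'rV[poly]_n) : v != 0 -> exists j, is_pivot_index v j.
Proof.
move=> nz.
have [j0 _] : exists j0 : 'I_n, v ord0 j0 != 0.
  apply: NNPP => H; move/negP: nz; apply; apply/eqP/rowP => j; rewrite mxE.
  by apply/eqP; apply: NNPP => h; apply: H; exists j; apply/negP.
case: (@arg_maxnP _ j0 predT (fun j : 'I_n => size (v ord0 j) * n + j)%N) => // j _ Hmax.
exists j.
have hj := ltn_ord j.
have [] := @pivot_intro n v j (size (v ord0 j)) erefl.
- move=> j'; have := Hmax j' isT; have hj' := ltn_ord j'.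
  by case/(lexn hj' hj) => [/ltnW|[->]].
- move=> j' hjj'; have := Hmax j' isT; have hj' := ltn_ord j'.
  by case/(lexn hj' hj) => [//|[_ h]]; move: hjj'; rewrite ltnNge h.
- by [].
Qed.

Lemma monic_nz (p : poly) : p \is monic -> p != 0.
Proof. by move=> h; apply: monic_neq0. Qed.

Lemma pivot_nz n (v : 'rV[poly]_n) j : v ord0 j \is monic -> v != 0.
Proof. by move=> /monic_nz h; apply/eqP => hv; move: h; rewrite hv mxE eqxx. Qed.

Lemma rowmod0 m n (M : 'M[poly]_(m, n)) : in_rowmod M 0.
Proof. by exists 0; rewrite mul0mx. Qed.

Lemma rowmodD m n (M : 'M[poly]_(m, n)) u v : in_rowmod M u -> in_rowmod M v -> in_rowmod M (u + v).
Proof. by move=> [c1 ->] [c2 ->]; exists (c1 + c2); rewrite mulmxDl. Qed.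

Lemma rowmodZ m n (M : 'M[poly]_(m, n)) (t : poly) v : in_rowmod M v -> in_rowmod M (t *: v).
Proof. by move=> [c ->]; exists (t *: c); rewrite scalemxAl. Qed.

Lemma rowmodB m n (M : 'M[poly]_(m, n)) u v : in_rowmod M u -> in_rowmod M v -> in_rowmod M (u - v).
Proof. by move=> hu hv; apply: rowmodD => //; rewrite -scaleN1r; apply: rowmodZ. Qed.

Lemma rowmod_row m n (M : 'M[poly]_(m, n)) i : in_rowmod M (row i M).
Proof. by exists (delta_mx 0 i); rewrite rowE. Qed.

Lemma rowmod_sub m k n (M : 'M[poly]_(m, n)) (P : 'M[poly]_(k, n)) :
  (forall i, in_rowmod M (row i P)) -> forall v, in_rowmod P v -> in_rowmod M v.
Proof.
move=> H v [c ->]; rewrite mulmx_sum_row.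
apply: (big_ind (in_rowmod M)); [exact: rowmod0| exact: rowmodD|].
by move=> i _; apply: rowmodZ.
Qed.

Lemma normalize n (v : 'rV[poly]_n) j : is_pivot_index v j -> v != 0 ->
  exists c : K, c != 0 /\ is_pivot_index (c%:P *: v) j /\ (c%:P *: v) ord0 j \is monic.
Proof.
move=> hp nz.
have [hs _] := pivotP hp.
have vj0 : v ord0 j != 0.
  by rewrite -size_poly_eq0 hs rsize_eq0.
have lc0 : lead_coef (v ord0 j) != 0 by rewrite lead_coef_eq0.
exists (lead_coef (v ord0 j))^-1; split; first by rewrite invr_eq0.
have hsz j' : size ((((lead_coef (v ord0 j))^-1)%:P *: v) ord0 j') = size (v ord0 j').
  by rewrite mxE mul_polyC size_scale // invr_eq0.
split.
  have [hp1 hp2] := pivotP hp.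
  have [] := @pivot_intro n (((lead_coef (v ord0 j))^-1)%:P *: v) j (rsize v).
  - by rewrite hsz.
  - by move=> j'; rewrite hsz size_le_rsize.
  - by move=> j' hj'; rewrite hsz hp2.
  by [].
by rewrite mxE mul_polyC monicE lead_coefZ mulVf.
Qed.

Lemma ach_of m n (M : 'M[poly]_(m, n)) v j :
  in_rowmod M v -> v != 0 -> is_pivot_index v j ->
  exists p, in_rowmod M p /\ is_pivot_index p j /\ p ord0 j \is monic.
Proof.
move=> hm nz hp; have [c [_ [h1 h2]]] := normalize hp nz.
by exists (c%:P *: v); split => //; apply: rowmodZ.
Qed.

End Basics.
Section PredDeg.
Variable K : fieldType.
Local Notation poly := {poly K}.

Lemma pred_deg k n (P : 'M[poly]_(k, n)) (pv : 'I_k -> 'I_n) (c : 'rV[poly]_k) :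
  injective pv -> (forall i, row i P != 0) -> (forall i, is_pivot_index (row i P) (pv i)) ->
  c != 0 -> exists i, is_pivot_index (c *m P) (pv i) /\ c *m P != 0.
Proof.
move=> pvinj Pnz Ppiv cnz.
have [i0 ci0] : exists i0, c ord0 i0 != 0.
  apply: NNPP => H; move/negP: cnz; apply; apply/eqP/rowP => j; rewrite mxE.
  by apply/eqP; apply: NNPP => h; apply: H; exists j; apply/negP.
pose E i := (size (c ord0 i) + rsize (row i P))%N.
case: (@arg_maxnP _ i0 (fun i => c ord0 i != 0) (fun i => E i * n + pv i)%N) => // ist cis Hmax.
have dpos i : (0 < rsize (row i P))%N by rewrite lt0n rsize_eq0.
have rowE' i j : (row i P) ord0 j = P i j by rewrite mxE.
have [hps hps'] := pivotP (Ppiv ist).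
rewrite rowE' in hps.
pose F := (E ist).-1.
have cspos i : c ord0 i != 0 -> (0 < size (c ord0 i))%N by rewrite lt0n size_poly_eq0.
have key i (j : 'I_n) : (size (c ord0 i * P i j)%R <= F)%N /\
   ((pv ist < j)%N || ((j == pv ist) && (i != ist)) -> (size (c ord0 i * P i j)%R < F)%N).
  have Fpos : (0 < F)%N.
    by rewrite /F /E; have := cspos _ cis; have := dpos ist; lia.
  case: (eqVneq (c ord0 i) 0) => [->|ci]; first by rewrite mul0r size_poly0.
  have hm := size_mul_leq (c ord0 i) (P i j).
  have hle : (size (P i j) <= rsize (row i P))%N by rewrite -rowE' size_le_rsize.
  have [_ hlt] := pivotP (Ppiv i).
  have hlt' : (pv i < j)%N -> (size (P i j) < rsize (row i P))%N by move=> h; rewrite -rowE' hlt.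
  have := Hmax i ci; case/(lexn (ltn_ord _) (ltn_ord _)) => [hE|[hE hpv]].
    have := cspos _ ci; rewrite /F /E in hE *; split; [lia|move=> _; lia].
  split; first by rewrite /F -hE /E; lia.
  move=> hcase.
  have hij : (pv i < j)%N.
    case/orP: hcase => [h|/andP [/eqP -> hne]]; first exact: leq_ltn_trans hpv h.
    rewrite ltn_neqAle hpv andbT; apply/negP => /eqP/val_inj/pvinj h; by rewrite h eqxx in hne.
  have := hlt' hij; have := cspos _ ci; rewrite /F -hE /E; lia.
have hPis : P ist (pv ist) != 0.
  by rewrite -size_poly_eq0 hps -lt0n dpos.
have htop : size (c ord0 ist * P ist (pv ist)) = F.
  by rewrite size_mul // /F /E hps.
have colE j : (c *m P) ord0 j = \sum_i c ord0 i * P i j by rewrite mxE.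
have [] := @pivot_intro K n (c *m P) (pv ist) F.
- rewrite colE (bigD1 ist) //= size_polyDl htop //.
  apply: (big_ind (fun p : poly => size p < F)%N).
  + by rewrite size_poly0 /F /E; have := cspos _ cis; have := dpos ist; lia.
  + by move=> x y hx hy; apply: leq_ltn_trans (size_polyD _ _) _; rewrite gtn_max hx hy.
  + by move=> i hi; apply: (proj2 (key i (pv ist))); rewrite eqxx hi orbT.
- move=> j; rewrite colE.
  apply: (big_ind (fun p : poly => size p <= F)%N).
  + by rewrite size_poly0.
  + by move=> x y hx hy; apply: leq_trans (size_polyD _ _) _; rewrite geq_max hx hy.
  + by move=> i _; exact: (proj1 (key i j)).
- move=> j hj; rewrite colE.
  apply: (big_ind (fun p : poly => size p < F)%N).
  + by rewrite size_poly0 /F /E; have := cspos _ cis; have := dpos ist; lia.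
  + by move=> x y hx hy; apply: leq_ltn_trans (size_polyD _ _) _; rewrite gtn_max hx hy.
  + by move=> i _; apply: (proj2 (key i j)); rewrite hj.
move=> hp hr; exists ist; split => //.
by rewrite -rsize_eq0 hr /F /E; have := cspos _ cis; have := dpos ist; lia.
Qed.

Definition ach m n (M : 'M[poly]_(m, n)) (j : 'I_n) :=
  exists p, in_rowmod M p /\ is_pivot_index p j /\ p ord0 j \is monic.

Lemma popov_pivots m n (M : 'M[poly]_(m, n)) r (P : 'M[poly]_(r, n)) :
  popov_form_of M P -> forall j, (j \in pivots P) <-> ach M j.
Proof.
case=> _ [pv [Hnz Hpiv Hinc Hmon Hcol]] Hmod j.
have pvinj : injective pv.
  move=> i i' h; apply/val_inj/eqP; case: (ltngtP i i') => // hi.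
  - by have := Hinc _ _ hi; rewrite h ltnn.
  - by have := Hinc _ _ hi; rewrite h ltnn.
have memE : (j \in pivots P) <-> exists i, pv i = j.
  rewrite /pivots mem_pmap; split.
  - by case/mapP => i _; rewrite (pivot_indexE (Hpiv i)) => -[->]; exists i.
  - by case=> i <-; apply/mapP; exists i; rewrite ?mem_enum // (pivot_indexE (Hpiv i)).
rewrite memE; split.
- case=> i <-; exists (row i P); split; first by apply/Hmod; apply: rowmod_row.
  by split => //; rewrite mxE.
- case=> p [hm [hp hmon]].
  have [c hc] := (proj1 (Hmod p)) hm.
  have pnz := pivot_nz hmon.
  have cnz : c != 0 by apply/eqP => h; move: pnz; rewrite hc h mul0mx eqxx.
  have [i [hi _]] := pred_deg pvinj Hnz Hpiv cnz.
  by exists i; rewrite -hc in hi; apply: pivot_uniq hi hp.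
Qed.

End PredDeg.
Section Reduce.
Variable K : fieldType.
Local Notation poly := {poly K}.

Lemma top_reduce n (v g : 'rV[poly]_n) (j : 'I_n) :
  is_pivot_index g j -> g ord0 j \is monic -> (size (g ord0 j) <= size (v ord0 j))%N ->
  exists t : poly,
   [/\ forall j', (size ((t *: g) ord0 j') <= size (v ord0 j'))%N
     , forall j' : 'I_n, (j < j')%N -> (size ((t *: g) ord0 j') < size (v ord0 j))%N
     & (size (v ord0 j - (t *: g) ord0 j)%R < size (v ord0 j))%N].
Abort.

Lemma top_reduce n (v g : 'rV[poly]_n) (j : 'I_n) :
  is_pivot_index g j -> g ord0 j \is monic -> (size (g ord0 j) <= size (v ord0 j))%N ->
  exists t : poly,
   [/\ forall j', (size ((t *: g) ord0 j') <= size (v ord0 j))%N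
     , forall j' : 'I_n, (j < j')%N -> (size ((t *: g) ord0 j') < size (v ord0 j))%N
     & (size (v ord0 j - (t *: g) ord0 j)%R < size (v ord0 j))%N].
Proof.
move=> hgp hgm hle.
set s := size (v ord0 j) in hle *.
have gj0 := monic_nz hgm.
have dgpos : (0 < size (g ord0 j))%N by rewrite lt0n size_poly_eq0.
have vj0 : v ord0 j != 0 by rewrite -size_poly_eq0 -lt0n; apply: leq_trans hle.
have lc0 : lead_coef (v ord0 j) != 0 by rewrite lead_coef_eq0.
pose t := lead_coef (v ord0 j) *: ('X^(s - size (g ord0 j)) : poly).
have ht : size t = (s - size (g ord0 j)).+1 by rewrite size_scale // size_polyXn.
have t0 : t != 0 by rewrite -size_poly_eq0 ht.
have [hgs hglt] := pivotP hgp.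
have entry j' : (t *: g) ord0 j' = t * g ord0 j' by rewrite mxE.
exists t; split.
- move=> j'; rewrite entry; apply: leq_trans (size_mul_leq _ _) _.
  have := size_le_rsize g j'; rewrite -hgs ht; move: hle dgpos; lia.
- move=> j' hj'; rewrite entry; apply: leq_ltn_trans (size_mul_leq _ _) _.
  have := hglt j' hj'; rewrite -hgs ht; move: hle dgpos; lia.
- apply: size_sub_lt.
  + have e a b : (a <= b)%N -> ((b - a).+1 + a).-1 = b by lia.
    by rewrite entry size_mul // ht e.
  + by rewrite entry lead_coefM lead_coefZ lead_coefXn mulr1 (monicP hgm) mulr1.
  + by rewrite lt0n size_poly_eq0.
Qed.

Lemma pivot_perturb n (p q : 'rV[poly]_n) j d :
  is_pivot_index p j -> size (p ord0 j) = d ->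
  (forall j', size (q ord0 j') <= d)%N -> (forall j' : 'I_n, (j <= j')%N -> size (q ord0 j') < d)%N ->
  [/\ is_pivot_index (p - q) j, size ((p - q) ord0 j) = d & lead_coef ((p - q) ord0 j) = lead_coef (p ord0 j)].
Proof.
move=> hp hd hq1 hq2.
have [hs hlt] := pivotP hp.
have entry j' : (p - q) ord0 j' = p ord0 j' - q ord0 j' by rewrite !mxE.
have hj : size ((p - q) ord0 j) = d.
  by rewrite entry size_polyDl // size_polyN hd hq2.
have [] := @pivot_intro K n (p - q) j d hj.
- move=> j'; rewrite entry; apply: leq_trans (size_polyD _ _) _; rewrite size_polyN geq_max hq1 andbT.
  by rewrite -hd hs size_le_rsize.
- move=> j' hj'; rewrite entry; apply: leq_ltn_trans (size_polyD _ _) _; rewrite size_polyN gtn_max hq2 ?andbT.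
    by rewrite -hd hs hlt.
  exact: ltnW.
move=> hpiv _; split => //.
by rewrite entry lead_coefDl // size_polyN hd hq2.
Qed.

End Reduce.
Lemma rk_lt a b x y n : (a < b)%N -> (x < n)%N -> (a * n + x < b * n + y)%N.
Proof. by move=> h1 h2; nia. Qed.
Lemma rk_lt' a b x y n : (a <= b)%N -> (x < y)%N -> (a * n + x < b * n + y)%N.
Proof. by move=> h1 h2; nia. Qed.
Lemma rk_inj a b x y n : (x < n)%N -> (y < n)%N -> (a * n + x = b * n + y)%N -> x = y.
Proof.
move=> hx hy e.
have [h1|[h1 h2]] := lexn hx hy (eq_leq e); first by move: e; nia.
have [h3|[h3 h4]] := lexn hy hx (eq_leq (esym e)); first by move: e; nia.
by apply/eqP; rewrite eqn_leq h2 h4.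
Qed.

Section Exist.
Variables (K : fieldType) (m n : nat) (M : 'M[{poly K}]_(m, n)).
Local Notation poly := {poly K}.

Definition cand j (p : 'rV[poly]_n) :=
  in_rowmod M p /\ is_pivot_index p j /\ p ord0 j \is monic.

Definition delta j : nat := epsilon (inhabits 0%N)
  (fun d => (exists p, cand j p /\ size (p ord0 j) = d) /\
            forall q, cand j q -> (d <= size (q ord0 j))%N).

Lemma deltaP j : ach M j ->
  (exists p, cand j p /\ size (p ord0 j) = delta j) /\
  forall q, cand j q -> (delta j <= size (q ord0 j))%N.
Proof.
move=> [p hp]; rewrite /delta.
apply: (epsilon_spec (inhabits 0%N) (fun d => (exists p, cand j p /\ size (p ord0 j) = d) /\
            forall q, cand j q -> (d <= size (q ord0 j))%N)).
have [d [[q [hq hd]] hmin]] := ex_min_prop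
   (ex_intro (fun d => exists q, cand j q /\ size (q ord0 j) = d) _ (ex_intro _ p (conj hp erefl))).
exists d; split; first by exists q.
by move=> q' hq'; apply: hmin; exists q'.
Qed.

Definition good j p := [/\ cand j p, size (p ord0 j) = delta j &
  forall j', j' != j -> ach M j' -> (size (p ord0 j') < delta j')%N].

Lemma good_exists j : ach M j -> exists p, good j p.
Proof.
move=> hj; have [[p0 [hp0 hs0]] hmin] := deltaP hj.
pose off (p : 'rV[poly]_n) j' := [/\ j' != j, ach M j' & (delta j' <= size (p ord0 j'))%N].
pose rk (p : 'rV[poly]_n) (j' : 'I_n) := (size (p ord0 j') * n + j')%N.
suff H : forall R p, cand j p -> size (p ord0 j) = delta j ->
    (forall j', off p j' -> rk p j' < R)%N -> exists p', good j p'.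
  apply: (H ((delta j).+1 * n)%N p0) => // j' _.
  case: hp0 => _ [hp _]; have [hs _] := pivotP hp.
  have := size_le_rsize p0 j'; rewrite -hs hs0 /rk.
  have := ltn_ord j'; nia.
elim=> [|R IH] p hp hpd hoff.
  exists p; split => // j' hne hach; rewrite ltnNge; apply/negP => hle.
  by have := hoff j' (And3 hne hach hle).
case: (classic (exists j0, off p j0 /\ rk p j0 = R)) => [[j0 [[hne0 hach0 hle0] hrk]] | hno]; last first.
  apply: (IH p) => // j' hj'; have := hoff j' hj'; rewrite ltnS leq_eqVlt => /orP [/eqP h|//].
  by exfalso; apply: hno; exists j'.
have [[g [hg hgs]] _] := deltaP hach0.
case: hg => hgm [hgp hgmon].
have hle1 : (size (g ord0 j0) <= size (p ord0 j0))%N by rewrite hgs.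
have [t [hq1 hq2 hq3]] := top_reduce hgp hgmon hle1.
set q := t *: g in hq1 hq2 hq3.
case: hp => hpm [hpp hpmon].
have [hps hplt] := pivotP hpp.
set s := size (p ord0 j0) in hq1 hq2 hq3 hle0 hrk.
have hsd : (s <= delta j)%N by rewrite -hpd hps size_le_rsize.
have hsd' : (j < j0)%N -> (s < delta j)%N by move=> h; rewrite -hpd hps hplt.
have hqj : forall j' : 'I_n, (j <= j')%N -> (size (q ord0 j') < delta j)%N.
  move=> j' hj'; case: (ltnP j0 j') => h; first exact: leq_trans (hq2 j' h) hsd.
  apply: leq_ltn_trans (hq1 j') (hsd' _).
  rewrite ltn_neqAle (leq_trans hj' h) andbT; apply/eqP => e.
  by move: hne0; rewrite (val_inj e) eqxx.
have [hpiv' hsz' hlc'] := @pivot_perturb K n p q j (delta j) hpp hpd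
  (fun j' => leq_trans (hq1 j') hsd) hqj.
apply: (IH (p - q)).
- split; first by apply: rowmodB => //; apply: rowmodZ.
  by split => //; rewrite monicE hlc' -monicE.
- exact: hsz'.
move=> j' [hne hach hle].
have entry j'' : (p - q) ord0 j'' = p ord0 j'' - q ord0 j'' by rewrite !mxE.
rewrite /rk; rewrite /rk in hrk.
have hj'n := ltn_ord j'; have hj0n := ltn_ord j0.
case: (eqVneq j' j0) => [->|hne'].
  by rewrite -hrk; apply: rk_lt => //; rewrite entry.
case: (leqP (size ((p - q) ord0 j')) (size (q ord0 j'))) => h.
  case: (ltngtP j0 j') => hjj.
  - by rewrite -hrk; apply: rk_lt => //; apply: leq_ltn_trans h (hq2 _ hjj).
  - by rewrite -hrk; apply: rk_lt' => //; apply: leq_trans h (hq1 _).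
  - by move: hne'; rewrite (val_inj hjj) eqxx.
have hpj : size (p ord0 j') = size ((p - q) ord0 j').
  have -> : p ord0 j' = (p - q) ord0 j' + q ord0 j' by rewrite entry subrK.
  by rewrite size_polyDl.
have hle2 : (delta j' <= size (p ord0 j'))%N by rewrite hpj.
have := hoff j' (And3 hne hach hle2).
rewrite /rk -hpj ltnS leq_eqVlt => /orP [/eqP e|//].
rewrite -hrk in e.
have ee : j' = j0 by apply: val_inj; exact: rk_inj hj'n hj0n e.
by rewrite ee eqxx in hne'.
Qed.

Definition achb j : bool := if excluded_middle_informative (ach M j) then true else false.
Lemma achbP j : reflect (ach M j) (achb j).
Proof. by rewrite /achb; case: excluded_middle_informative => h; constructor. Qed.

Definition Sach : {set 'I_n} := [set j | achb j].
Definition gp j := epsilon (inhabits (0 : 'rV[poly]_n)) (good j).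
Lemma gpP j : j \in Sach -> good j (gp j).
Proof.
rewrite inE => /achbP h; rewrite /gp; apply: (epsilon_spec (inhabits (0 : 'rV[poly]_n)) (good j)).
exact: good_exists.
Qed.

Definition PP : 'M[poly]_(#|Sach|, n) := \matrix_(i, j) gp (enum_val i) ord0 j.
Lemma rowPP i : row i PP = gp (enum_val i).
Proof. by apply/rowP => j; rewrite !mxE. Qed.

Lemma PP_rows_nz i : row i PP != 0.
Proof. by rewrite rowPP; have [[_ [_ hm]] _ _] := gpP (enum_valP i); exact: pivot_nz hm. Qed.
Lemma PP_piv i : is_pivot_index (row i PP) (enum_val i).
Proof. by rewrite rowPP; have [[_ [hp _]] _ _] := gpP (enum_valP i). Qed.
Lemma PP_inj : injective (fun i : 'I_#|Sach| => enum_val i).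
Proof. exact: enum_val_inj. Qed.

Lemma PP_popov : popov PP.
Proof.
exists (fun i => enum_val i); split.
- exact: PP_rows_nz.
- exact: PP_piv.
- by move=> i i' h; exact: enum_val_mono.
- by move=> i; rewrite mxE; have [[_ [_ hm]] _ _] := gpP (enum_valP i).
- move=> i i' hne; rewrite !mxE.
  have [_ _ hred] := gpP (enum_valP i').
  have [_ hd _] := gpP (enum_valP i).
  rewrite hd; apply: hred.
    by apply/eqP => /enum_val_inj h; rewrite h eqxx in hne.
  by have := enum_valP i; rewrite inE => /achbP.
Qed.

Lemma PP_in_M v : in_rowmod PP v -> in_rowmod M v.
Proof.
apply: rowmod_sub => i; rewrite rowPP; by have [[h _] _ _] := gpP (enum_valP i).
Qed.

Lemma M_in_PP v : in_rowmod M v -> in_rowmod PP v.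
Proof.
suff H : forall (N : nat) (v : 'rV[poly]_n), in_rowmod M v ->
    (forall j : 'I_n, v != 0%R -> is_pivot_index v j -> (rsize v * n + j < N)%N) -> in_rowmod PP v.
  move=> hv; apply: (H (rsize v * n + n)%N) => // j _ _; rewrite ltn_add2l; exact: ltn_ord.
clear v; elim=> [|N IH] v hv hN.
  case: (eqVneq v 0) => [->|nz]; first exact: rowmod0.
  by have [j hj] := pivot_exists nz; have := hN j nz hj.
case: (eqVneq v 0) => [->|nz]; first exact: rowmod0.
have [j hj] := pivot_exists nz.
have hach := ach_of hv nz hj.
have jS : j \in Sach by rewrite inE; apply/achbP.
have hi : enum_val (enum_rank_in jS j) = j := enum_rankK_in jS jS.
have [[hg0 [hgp hgm]] hgd _] := gpP jS.
have [c [c0 [hpc hmc]]] := normalize hj nz.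
have [_ hmin] := deltaP hach.
have hcand : cand j (c%:P *: v) by split; [apply: rowmodZ | split].
have hle : (size (gp j ord0 j) <= size (v ord0 j))%N.
  rewrite hgd; apply: leq_trans (hmin _ hcand) _.
  by rewrite mxE mul_polyC size_scale.
have [t [hq1 hq2 hq3]] := top_reduce hgp hgm hle.
have -> : v = (v - t *: gp j) + t *: gp j by rewrite subrK.
apply: rowmodD; last first.
  by rewrite -hi -rowPP; apply: rowmodZ; apply: rowmod_row.
apply: IH; first by apply: rowmodB => //; apply: rowmodZ.
move=> j2 nz2 hp2.
have [hs hsl] := pivotP hj.
have entry j' : (v - t *: gp j) ord0 j' = v ord0 j' - (t *: gp j) ord0 j' by rewrite !mxE.
have b1 (j' : 'I_n) : (size ((v - t *: gp j)%R ord0 j') <= rsize v)%N.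
  rewrite entry; apply: leq_trans (size_polyD _ _) _; rewrite size_polyN geq_max size_le_rsize.
  by rewrite -hs hq1.
have b2 (j' : 'I_n) : (j <= j')%N -> (size ((v - t *: gp j)%R ord0 j') < rsize v)%N.
  rewrite leq_eqVlt => /orP [/eqP e|h].
    have -> : j' = j by apply: val_inj.
    by rewrite entry -hs.
  rewrite entry; apply: leq_ltn_trans (size_polyD _ _) _; rewrite size_polyN gtn_max hsl //.
  by rewrite -hs hq2.
have hr : (rsize (v - t *: gp j)%R <= rsize v)%N by apply: rsize_le.
have := hN j nz hj; rewrite ltnS => hN'.
apply: leq_trans hN'.
have [hs2 _] := pivotP hp2.
case: (ltngtP (rsize (v - t *: gp j)%R) (rsize v)) => hrr.
- by apply: rk_lt.
- by move: hrr; rewrite ltnNge hr.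
- apply: rk_lt'; first by rewrite hrr.
  rewrite ltnNge; apply/negP => h; have := b2 _ h; by rewrite hs2 hrr ltnn.
Qed.
End Exist.

Section Rank.
Variables (K : fieldType) (m n : nat) (M : 'M[{poly K}]_(m, n)).

Lemma PP_rank : #|Sach M| = prank M.
Proof.
rewrite /prank.
set Pf := map_mx (@tofrac _) (PP M).
have eqM : (map_mx (@tofrac _) M == Pf)%MS.
  apply/andP; split; apply/row_subP => i; rewrite -map_row.
  - have [c ->] := M_in_PP (rowmod_row M i); by rewrite map_mxM submxMl.
  - have [c ->] := PP_in_M (rowmod_row (PP M) i); by rewrite map_mxM submxMl.
rewrite (eqmx_rank eqM).
apply/esym/eqP; rewrite -/(row_free Pf) -kermx_eq0; apply/eqP.
apply/row_matrixP => i; rewrite row0; apply: NNPP => hu.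
have hu0 : row i (kermx Pf) *m Pf = 0 by rewrite -row_mul mulmx_ker row0.
have [d [c [d0 hc]]] := clear_den (row i (kermx Pf)).
have hcP : c *m PP M = 0.
  have h : map_mx (@tofrac _) (c *m PP M) = 0 by rewrite map_mxM hc -scalemxAl hu0 scaler0.
  apply/rowP => j; move/rowP: h => /(_ j); rewrite !mxE => /eqP.
  by rewrite tofrac_eq0 => /eqP.
have cnz : c != 0.
  apply/eqP => c0; apply: hu; apply/eqP.
  have : tofrac d *: row i (kermx Pf) == 0 by rewrite -hc c0; apply/eqP/rowP => j; rewrite !mxE tofrac0.
  by rewrite scaler_eq0 tofrac_eq0 (negbTE d0).
have [j [_ hnz]] := pred_deg (@PP_inj _ _ _ M) (@PP_rows_nz _ _ _ M) (@PP_piv _ _ _ M) cnz.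
by rewrite hcP eqxx in hnz.
Qed.

Lemma popov_exists : exists r (P : 'M[{poly K}]_(r, n)), popov_form_of M P.
Proof.
exists #|Sach M|, (PP M); split; [exact: PP_rank | exact: PP_popov |].
by move=> v; split; [exact: M_in_PP | exact: PP_in_M].
Qed.

Lemma pivot_support_spec j : j \in pivot_support M <-> ach M j.
Proof.
rewrite /pivot_support; case: excluded_middle_informative => [H|H].
  case: constructive_indefinite_description => [[r P]] /= HP.
  exact: (popov_pivots HP j).
exfalso; apply: H; have [r [P HP]] := popov_exists.
by exists (existT _ r P).
Qed.
End Rank.

Section Final.
Variable K : fieldType.
Local Notation poly := {poly K}.

Lemma colsub_mulmx m n k (c : 'rV[poly]_m) (A : 'M[poly]_(m, n)) (f : 'I_k -> 'I_n) :
  colsub f (c *m A) = c *m colsub f A.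
Proof. by apply/rowP => j; rewrite !mxE; apply: eq_bigr => i _; rewrite !mxE. Qed.

Lemma colsub_pivot n k (f : 'I_k -> 'I_n) (v : 'rV[poly]_n) (i0 : 'I_k) :
  (forall i i' : 'I_k, (i < i')%N -> (f i < f i')%N) ->
  is_pivot_index v (f i0) -> is_pivot_index (colsub f v) i0.
Proof.
move=> mono hp; have [hs hlt] := pivotP hp.
have [] := @pivot_intro K k (colsub f v) i0 (rsize v).
- by rewrite mxE.
- by move=> j; rewrite mxE size_le_rsize.
- by move=> j hj; rewrite mxE hlt // mono.
by [].
Qed.
End Final.

Theorem lemma4p4 (K : fieldType) (m n : nat) (A : 'M[{poly K}]_(m, n))
    (J : {set 'I_n}) :
  let rhoA : {set 'I_n} := [set j in pivot_support A] in
  let phi_rhoAJ : {set 'I_n} :=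
    [set @phiJ n J i | i in pivot_support (colsJ A J)] in
  rhoA :&: J \subset phi_rhoAJ /\
  (rhoA \subset J -> rhoA :&: J = phi_rhoAJ).
Proof.
move=> rhoA phi_rhoAJ.
pose f := @phiJ n J.
have mono : forall i i' : 'I_#|J|, (i < i')%N -> (f i < f i')%N by move=> i i'; exact: enum_val_mono.
have rhoE (j : 'I_n) : (j \in rhoA) <-> ach A j by rewrite inE; exact: pivot_support_spec.
have rhoJE (i : 'I_#|J|) : (i \in pivot_support (colsJ A J)) <-> ach (colsJ A J) i := pivot_support_spec _ i.
have modJ (w : 'rV[{poly K}]_#|J|) : in_rowmod (colsJ A J) w <-> exists v, in_rowmod A v /\ w = colsub f v.
  split.
    by case=> c ->; exists (c *m A); split; [exists c | rewrite colsub_mulmx].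
  by case=> v [[c ->] ->]; exists c; rewrite colsub_mulmx.
have part1 : rhoA :&: J \subset phi_rhoAJ.
  apply/subsetP => j; rewrite inE => /andP [hj hjJ].
  have [p [hm [hp hmon]]] := (proj1 (rhoE j)) hj.
  have hi0 : f (enum_rank_in hjJ j) = j := enum_rankK_in hjJ hjJ.
  apply/imsetP; exists (enum_rank_in hjJ j); last by rewrite -/f hi0.
  apply/(rhoJE _); exists (colsub f p); split; first by apply/modJ; exists p.
  split; first by apply: colsub_pivot => //; rewrite hi0.
  by rewrite mxE hi0.
split => // hsub.
apply/eqP; rewrite eqEsubset part1 /=.
apply/subsetP => y /imsetP [i hi ->].
have [w [hw [hpw hmw]]] := (proj1 (rhoJE i)) hi.
have [v [hv hwv]] := (proj1 (modJ w)) hw.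
have wnz := pivot_nz hmw.
have vnz : v != 0.
  apply/eqP => v0; move: wnz; rewrite hwv v0.
  have -> : colsub f (0 : 'rV[{poly K}]_n) = 0 by apply/rowP => j; rewrite !mxE.
  by rewrite eqxx.
have [j0 hj0] := pivot_exists vnz.
have hach := ach_of hv vnz hj0.
have j0A : j0 \in rhoA by apply/rhoE.
have j0J : j0 \in J := subsetP hsub _ j0A.
have hi1 : f (enum_rank_in j0J j0) = j0 := enum_rankK_in j0J j0J.
have hp1 : is_pivot_index (colsub f v) (enum_rank_in j0J j0).
  by apply: colsub_pivot => //; rewrite hi1.
rewrite -hwv in hp1; have e := pivot_uniq hpw hp1.
by rewrite -/f e hi1 inE j0A j0J.
Qed.
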